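(* Let $X$ be an FK-space containing $\phi$ and let $(Y^n)_{n\ge1}$ be FK-spaces such that each $Y^n$ is deferred Ces\`{a}ro conull with respect to $X$. Then $\bigcap_n Y^n$ (with its intersection FK-topology) is deferred Ces\`{a}ro conull with respect to $X$.
   Context: An FK-space is a vector subspace of the space $w$ of all complex sequences with a complete metrizable locally convex topology in which all coordinate functionals are continuous; $X'$ is the continuous dual. The intersection $\bigcap_n Y^n$ of FK-spaces is an FK-space with the topology generated by all seminorms of all $Y^n$ (paranorm $\sum_n \rho_n/(2^n(1+\rho_n))$). $\delta^j$ is the sequence with $1$ in position $j$, $0$ elsewhere; $\phi=\operatorname{span}\{\delta^j\}$. Fix nonnegative integer sequences $p(n)<q(n)$ with $q(n)\to\infty$. For $x\in w$ let $x^{(k)}=\sum_{j=1}^k x_j\delta^j$ and $T_n(x)=\frac{1}{q(n)-p(n)}\sum_{k=p(n)+1}^{q(n)}x^{(k)}$. For an FK-space $X\supseteq\phi$: $D_p^qW(X)=\{x\in X : f(T_n(x))\to f(x)\ \forall f\in X'\}$; $D_p^qB(X)=\{x\in X : \sup_n|f(T_n(x))|<\infty\ \forall f\in X'\}$. For FK-spaces $X\subseteq Y$ with $D_p^qW(X)\neq D_p^qB(X)$, $Y$ is called deferred Ces\`{a}ro conull with respect to $X$ if $D_p^qB(X)\subseteq D_p^qW(Y)$. *)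

(* Defs.v *)
From Stdlib Require Import Reals List.
From Coquelicot Require Import Coquelicot.
Open Scope R_scope.

(* Complex sequences; [x j] is the (j+1)-th coordinate of the paper's x. *)
Definition cseq := nat -> C.

Definition szero : cseq := fun _ => RtoC 0.
Definition sadd (x y : cseq) : cseq := fun j => Cplus (x j) (y j).
Definition sscal (c : C) (x : cseq) : cseq := fun j => Cmult c (x j).
Definition ssub (x y : cseq) : cseq := fun j => Cminus (x j) (y j).

Definition delta (j : nat) : cseq := fun i => if Nat.eqb i j then RtoC 1 else RtoC 0.

Definition subspace (X : cseq -> Prop) : Prop :=
  X szero /\ (forall x y, X x -> X y -> X (sadd x y)) /\
  (forall c x, X x -> X (sscal c x)).

Definition seminorm_family {I : Type} (X : cseq -> Prop) (p : I -> cseq -> R) : Prop :=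
  forall i, (forall x, X x -> 0 <= p i x) /\
    (forall x y, X x -> X y -> p i (sadd x y) <= p i x + p i y) /\
    (forall c x, X x -> p i (sscal c x) = Cmod c * p i x).

Definition countable_index (I : Type) : Prop :=
  exists e : nat -> option I, forall i, exists n, e n = Some i.

Definition semisum {I : Type} (p : I -> cseq -> R) (l : list I) (x : cseq) : R :=
  fold_right (fun i acc => p i x + acc) 0 l.

(* Continuity (at 0, hence everywhere for linear maps) of a functional
   for the locally convex topology generated by the family p. *)
Definition continuous_wrt {I : Type} (X : cseq -> Prop) (p : I -> cseq -> R)
  (f : cseq -> C) : Prop :=
  exists (l : list I) (c : R), forall x, X x -> Cmod (f x) <= c * semisum p l x.

Definition linear_on (X : cseq -> Prop) (f : cseq -> C) : Prop :=
  (forall x y, X x -> X y -> f (sadd x y) = Cplus (f x) (f y)) /\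
  (forall c x, X x -> f (sscal c x) = Cmult c (f x)).

Definition dual {I : Type} (X : cseq -> Prop) (p : I -> cseq -> R) (f : cseq -> C) : Prop :=
  linear_on X f /\ continuous_wrt X p f.

(* sequential completeness (equivalent to completeness for countable families) *)
Definition complete_wrt {I : Type} (X : cseq -> Prop) (p : I -> cseq -> R) : Prop :=
  forall u : nat -> cseq, (forall m, X (u m)) ->
    (forall i (eps : R), 0 < eps -> exists N, forall m n, (N <= m)%nat -> (N <= n)%nat ->
        p i (ssub (u m) (u n)) < eps) ->
    exists x, X x /\ forall i, is_lim_seq (fun m => p i (ssub (u m) x)) 0.

(* FK-space: vector subspace of w with a complete metrizable locally convex
   topology (given by a countable family of seminorms) in which all
   coordinate functionals are continuous (this also gives Hausdorffness). *)
Definition is_FK {I : Type} (X : cseq -> Prop) (p : I -> cseq -> R) : Prop :=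
  subspace X /\ seminorm_family X p /\ countable_index I /\
  (forall j, continuous_wrt X p (fun x => x j)) /\ complete_wrt X p.

Definition contains_phi (X : cseq -> Prop) : Prop := forall j, X (delta j).

(* x^(k) = sum_{j=1}^k x_j delta^j : keeps the first k coordinates *)
Definition trunc (k : nat) (x : cseq) : cseq :=
  fun j => if Nat.ltb j k then x j else RtoC 0.

Definition csum (l : list C) : C := fold_right Cplus (RtoC 0) l.

(* T_n(x) = 1/(q n - p n) * sum_{k = p n + 1}^{q n} x^(k) *)
Definition Tn (pp qq : nat -> nat) (n : nat) (x : cseq) : cseq :=
  fun j => Cmult (RtoC (/ INR (qq n - pp n)))
     (csum (map (fun k => trunc k x j) (seq (S (pp n)) (qq n - pp n)))).

Definition DW (pp qq : nat -> nat) {I : Type} (X : cseq -> Prop) (p : I -> cseq -> R)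
  (x : cseq) : Prop :=
  X x /\ forall f, dual X p f ->
    is_lim_seq (fun n => Cmod (Cminus (f (Tn pp qq n x)) (f x))) 0.

Definition DB (pp qq : nat -> nat) {I : Type} (X : cseq -> Prop) (p : I -> cseq -> R)
  (x : cseq) : Prop :=
  X x /\ forall f, dual X p f -> exists M : R, forall n, Cmod (f (Tn pp qq n x)) <= M.

Definition dc_conull (pp qq : nat -> nat)
  {IX : Type} (X : cseq -> Prop) (pX : IX -> cseq -> R)
  {IY : Type} (Y : cseq -> Prop) (pY : IY -> cseq -> R) : Prop :=
  is_FK X pX /\ is_FK Y pY /\ (forall x, X x -> Y x) /\
  (exists x, ~ (DW pp qq X pX x <-> DB pp qq X pX x)) /\
  (forall x, DB pp qq X pX x -> DW pp qq Y pY x).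

Definition inter_space (Y : nat -> cseq -> Prop) : cseq -> Prop :=
  fun x => forall n, Y n x.

Definition inter_semi {IY : nat -> Type} (pY : forall n, IY n -> cseq -> R)
  : {n : nat & IY n} -> cseq -> R :=
  fun ni x => pY (projT1 ni) (projT2 ni) x.

(* Main.v *)
Require Import Defs.
From Stdlib Require Import Reals List Lra Lia Cantor IndefiniteDescription ClassicalEpsilon FunctionalExtensionality Classical.
From Coquelicot Require Import Coquelicot.
From mathcomp Require classical_sets.
Open Scope R_scope.


Definition V := nat -> cseq.
Definition vzero : V := fun _ => szero.
Definition vadd (u v : V) : V := fun i => sadd (u i) (v i).
Definition vscal (t : R) (v : V) : V := fun i => sscal (RtoC t) (v i).

Ltac veq_core := let i := fresh "i" in let j := fresh "j" in
  apply functional_extensionality; intro i; apply functional_extensionality; intro j;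
  unfold vadd, vscal, vzero, sadd, sscal, szero, Cplus, Cmult, RtoC;
  apply injective_projections; simpl.
Ltac veq := veq_core; ring.

Definition func (G : V*R -> Prop) := forall v r1 r2, G (v,r1) -> G (v,r2) -> r1 = r2.
Definition good (Dom : V -> Prop) (p : V -> R) (G : V*R -> Prop) :=
  func G /\ (forall v r, G (v,r) -> Dom v) /\
  (forall u a v b, G (u,a) -> G (v,b) -> G (vadd u v, a+b)) /\
  (forall t v a, G (v,a) -> G (vscal t v, t*a)) /\
  (forall v r, G (v,r) -> r <= p v).

Lemma good_two Dom p (U : V*R -> Prop) :
  (forall z1 z2, U z1 -> U z2 -> exists H, good Dom p H /\ H z1 /\ H z2 /\ forall z, H z -> U z) ->
  good Dom p U.
Proof.
intros K. repeat split.
- intros v r1 r2 H1 H2. destruct (K _ _ H1 H2) as [H [[Hf _] [A [B _]]]]. exact (Hf _ _ _ A B).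
- intros v r H1. destruct (K _ _ H1 H1) as [H [[_ [Hd _]] [A _]]]. exact (Hd _ _ A).
- intros u a v b H1 H2. destruct (K _ _ H1 H2) as [H [[_ [_ [Ha _]]] [A [B C]]]]. apply C, Ha; auto.
- intros t v a H1. destruct (K _ _ H1 H1) as [H [[_ [_ [_ [Hs _]]]] [A [_ C]]]]. apply C, Hs; auto.
- intros v r H1. destruct (K _ _ H1 H1) as [H [[_ [_ [_ [_ Hp]]]] [A _]]]. exact (Hp _ _ A).
Qed.

Lemma good_ext Dom p G G' : good Dom p G -> (forall z, G' z <-> G z) -> good Dom p G'.
Proof.
intros Hg E. apply good_two. intros z1 z2 A B. exists G.
split; [exact Hg|]. split; [apply E; auto|]. split; [apply E; auto|].
intros z Hz; apply E; auto.
Qed.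

Lemma inv_lin d a y : d <> 0 -> d * y = a -> / d * a = y.
Proof. intros Hd <-. field. auto. Qed.

Lemma uniq_decomp (G : V*R -> Prop) y s1 b1 s2 b2 t1 t2 :
  (forall u a v b, G (u,a) -> G (v,b) -> G (vadd u v, a+b)) ->
  (forall t v a, G (v,a) -> G (vscal t v, t*a)) ->
  (forall r, ~ G (y, r)) ->
  G (s1,b1) -> G (s2,b2) -> vadd s1 (vscal t1 y) = vadd s2 (vscal t2 y) ->
  t1 = t2 /\ s1 = s2.
Proof.
intros Ha Hs Hy G1 G2 Heq.
destruct (Req_dec t1 t2) as [Et|Nt].
- subst t2. split; auto.
  assert (X : s1 = vadd (vadd s1 (vscal t1 y)) (vscal (-t1) y)) by veq.
  rewrite Heq in X. rewrite X. veq.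
- exfalso.
  assert (G3 := Hs (/(t1 - t2)) _ _ (Ha _ _ _ _ G2 (Hs (-1) _ _ G1))).
  assert (Ey : vscal (/ (t1 - t2)) (vadd s2 (vscal (-1) s1)) = y).
  { apply functional_extensionality; intro i; apply functional_extensionality; intro j.
    assert (Hij := f_equal (fun w => w i j) Heq). simpl in Hij.
    unfold vadd, vscal, sadd, sscal, Cplus, Cmult, RtoC in *; simpl in *.
    assert (H1 := f_equal fst Hij). assert (H2 := f_equal snd Hij). simpl in H1, H2.
    apply injective_projections; simpl.
    + assert (Z: t1 - t2 <> 0) by lra.
      replace (fst (s2 i j) + (-1 * fst (s1 i j) - 0 * snd (s1 i j))) with ((t1-t2) * fst (y i j)) by nra.
      ring_simplify. field. auto.
    + assert (Z: t1 - t2 <> 0) by lra.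
      replace (snd (s2 i j) + (-1 * snd (s1 i j) + 0 * fst (s1 i j))) with ((t1-t2) * snd (y i j)) by nra.
      ring_simplify. field. auto. }
  rewrite Ey in G3. exact (Hy _ G3).
Qed.

Lemma extend_step (Dom : V -> Prop) (p : V -> R) (G : V*R -> Prop) y :
  (forall u v, Dom u -> Dom v -> Dom (vadd u v)) ->
  (forall t v, Dom v -> Dom (vscal t v)) ->
  (forall u v, Dom u -> Dom v -> p (vadd u v) <= p u + p v) ->
  (forall t v, 0 < t -> Dom v -> p (vscal t v) = t * p v) ->
  good Dom p G -> (exists z, G z) -> Dom y -> (forall r, ~ G (y, r)) ->
  exists E, good Dom p E /\ (forall z, G z -> E z) /\ exists r, E (y, r).
Proof.
intros HDa HDs Hpa Hps Hg [[s0 b0] Hz0] Hy Hny.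
destruct Hg as [Hf [Hd [Ha [Hs Hp]]]].
set (Aset := fun r => exists s b, G (s,b) /\ r = b - p (vadd s (vscal (-1) y))).
assert (Key : forall s b s' b', G (s,b) -> G (s',b') ->
   b - p (vadd s (vscal (-1) y)) <= p (vadd s' y) - b').
{ intros s b s' b' G1 G2.
  assert (P1 := Hp _ _ (Ha _ _ _ _ G1 G2)).
  assert (Eq : vadd s s' = vadd (vadd s (vscal (-1) y)) (vadd s' y)) by veq.
  rewrite Eq in P1.
  assert (P2 := Hpa (vadd s (vscal (-1) y)) (vadd s' y)
     (HDa _ _ (Hd _ _ G1) (HDs _ _ Hy)) (HDa _ _ (Hd _ _ G2) Hy)).
  lra. }
destruct (completeness Aset) as [a [Hub Hlub]].
{ exists (p (vadd s0 y) - b0). intros r [s [b [G1 ->]]]. apply Key; auto. }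
{ exists (b0 - p (vadd s0 (vscal (-1) y))). exists s0, b0. auto. }
assert (Ha1 : forall s b, G (s,b) -> b - p (vadd s (vscal (-1) y)) <= a).
{ intros s b G1. apply Hub. exists s, b. auto. }
assert (Ha2 : forall s b, G (s,b) -> a <= p (vadd s y) - b).
{ intros s b G1. apply Hlub. intros r [s' [b' [G2 ->]]]. apply Key; auto. }
set (E := fun z : V*R => exists s b t, G (s,b) /\ z = (vadd s (vscal t y), b + t * a)).
assert (HU : forall s1 b1 s2 b2 t1 t2, G (s1,b1) -> G (s2,b2) ->
  vadd s1 (vscal t1 y) = vadd s2 (vscal t2 y) -> t1 = t2 /\ s1 = s2).
{ intros. eapply uniq_decomp; eauto. }
exists E. split; [|split].
- split; [|split; [|split; [|split]]].
  + intros v r1 r2 [s1 [b1 [t1 [G1 E1]]]] [s2 [b2 [t2 [G2 E2]]]].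
    injection E1 as E1a E1b. injection E2 as E2a E2b.
    destruct (HU _ _ _ _ _ _ G1 G2 (eq_trans (eq_sym E1a) E2a)) as [-> ->].
    rewrite (Hf _ _ _ G1 G2) in E1b. congruence.
  + intros v r [s [b [t [G1 E1]]]]. injection E1 as -> _. apply HDa; auto. eapply Hd; eauto.
  + intros u a1 v b1 [s1 [c1 [t1 [G1 E1]]]] [s2 [c2 [t2 [G2 E2]]]].
    injection E1 as -> ->. injection E2 as -> ->.
    exists (vadd s1 s2), (c1 + c2), (t1 + t2). split; [apply Ha; auto|].
    f_equal; [veq | ring].
  + intros c v a1 [s1 [c1 [t1 [G1 E1]]]]. injection E1 as -> ->.
    exists (vscal c s1), (c * c1), (c * t1). split; [apply Hs; auto|].
    f_equal; [veq | ring].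
  + intros v r [s [b [t [G1 E1]]]]. injection E1 as -> ->.
    destruct (Rtotal_order t 0) as [Hneg|[H0|Hpos]].
    * set (u := - t). assert (Hu : 0 < u) by (unfold u; lra).
      assert (G2 := Hs (/u) _ _ G1).
      assert (A1 := Ha1 _ _ G2).
      assert (Eq : vscal u (vadd (vscal (/u) s) (vscal (-1) y)) = vadd s (vscal t y)).
      { veq_core; unfold u; field; lra. }
      rewrite <- Eq. rewrite Hps; auto.
      2:{ apply HDa; [apply HDs; eapply Hd; eauto | apply HDs; auto]. }
      assert (Hinv : u * / u = 1) by (field; lra).
      replace t with (-u) by (unfold u; ring).
      assert (u * (/ u * b - p (vadd (vscal (/ u) s) (vscal (-1) y))) <= u * a)
        by (apply Rmult_le_compat_l; lra).
      rewrite Rmult_minus_distr_l in H.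
      replace (u * (/ u * b)) with b in H by (field; lra). lra.
    * subst t. replace (vadd s (vscal 0 y)) with s by veq. assert (HH := Hp _ _ G1). lra.
    * assert (G2 := Hs (/t) _ _ G1).
      assert (A2 := Ha2 _ _ G2).
      assert (Eq : vscal t (vadd (vscal (/t) s) y) = vadd s (vscal t y)).
      { veq_core; field; lra. }
      rewrite <- Eq. rewrite Hps; auto.
      2:{ apply HDa; [apply HDs; eapply Hd; eauto | auto]. }
      assert (Hinv : t * / t = 1) by (field; lra).
      assert (t * a <= t * (p (vadd (vscal (/ t) s) y) - / t * b))
        by (apply Rmult_le_compat_l; lra).
      rewrite Rmult_minus_distr_l in H.
      replace (t * (/ t * b)) with b in H by (field; lra). lra.
- intros [s b] G1. exists s, b, 0. split; auto. f_equal; [veq | ring].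
- exists (0 * b0 + 1 * a). exists (vscal 0 s0), (0 * b0), 1. split; [apply Hs; auto|].
  f_equal. veq.
Qed.

Lemma HB (Dom : V -> Prop) (p : V -> R) (M : V -> Prop) (phi : V -> R) :
  (forall u v, Dom u -> Dom v -> Dom (vadd u v)) ->
  (forall t v, Dom v -> Dom (vscal t v)) ->
  (forall u v, Dom u -> Dom v -> p (vadd u v) <= p u + p v) ->
  (forall t v, 0 < t -> Dom v -> p (vscal t v) = t * p v) ->
  M vzero -> (forall v, M v -> Dom v) ->
  (forall u v, M u -> M v -> M (vadd u v)) ->
  (forall t v, M v -> M (vscal t v)) ->
  (forall u v, M u -> M v -> phi (vadd u v) = phi u + phi v) ->
  (forall t v, M v -> phi (vscal t v) = t * phi v) ->
  (forall v, M v -> phi v <= p v) ->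
  exists Phi : V -> R,
    (forall u v, Dom u -> Dom v -> Phi (vadd u v) = Phi u + Phi v) /\
    (forall t v, Dom v -> Phi (vscal t v) = t * Phi v) /\
    (forall v, Dom v -> Phi v <= p v) /\
    (forall v, M v -> Phi v = phi v).
Proof.
intros HDa HDs Hpa Hps HM0 HMD HMa HMs Hfa Hfs Hfp.
set (Gphi := fun z : V*R => M (fst z) /\ snd z = phi (fst z)).
assert (Ggood : good Dom p Gphi).
{ split; [|split; [|split; [|split]]]; unfold func, Gphi; simpl.
  - intros v r1 r2 [_ ->] [_ ->]. auto.
  - intros v r [H _]; auto.
  - intros u a v b [H1 E1] [H2 E2]. subst. split; auto. symmetry; auto.
  - intros t v a [H1 E1]. subst. split; auto. symmetry; auto.
  - intros v r [H1 E1]. subst. auto. }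
set (P := fun A : classical_sets.set (V*R) => good Dom p (fun z => A z \/ Gphi z)).
destruct (@classical_sets.Zorn_bigcup (V*R) P) as [A [PA Amax]].
{ intros F FP Ftot. unfold P, classical_sets.bigcup, classical_sets.mkset.
  apply good_two. intros z1 z2 H1 H2.
  destruct H1 as [[X1 F1 X1z]|G1]; destruct H2 as [[X2 F2 X2z]|G2].
  - destruct (Ftot _ _ F1 F2) as [S12|S21].
    + exists (fun z => X2 z \/ Gphi z). split; [apply FP; auto|].
      split; [left; apply S12; auto|]. split; [left; auto|].
      intros z [Hz|Hz]; [left; exists X2; auto | right; auto].
    + exists (fun z => X1 z \/ Gphi z). split; [apply FP; auto|].
      split; [left; auto|]. split; [left; apply S21; auto|].
      intros z [Hz|Hz]; [left; exists X1; auto | right; auto].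
  - exists (fun z => X1 z \/ Gphi z). split; [apply FP; auto|].
    split; [left; auto|]. split; [right; auto|].
    intros z [Hz|Hz]; [left; exists X1; auto | right; auto].
  - exists (fun z => X2 z \/ Gphi z). split; [apply FP; auto|].
    split; [right; auto|]. split; [left; auto|].
    intros z [Hz|Hz]; [left; exists X2; auto | right; auto].
  - exists Gphi. split; [auto|]. split; [auto|]. split; [auto|]. intros z Hz; right; auto. }
set (Gf := fun z => A z \/ Gphi z).
assert (Gfgood : good Dom p Gf) by exact PA.
assert (Tot : forall y, Dom y -> exists r, Gf (y, r)).
{ intros y Hy. apply NNPP. intro Hn.
  assert (Hn' : forall r, ~ Gf (y, r)) by (intros r Hr; apply Hn; exists r; auto).
  destruct (extend_step Dom p Gf y HDa HDs Hpa Hps Gfgood) as [E [Eg [Esub [r Er]]]]; auto.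
  { exists (vzero, phi vzero). right. split; auto. }
  apply (Amax E).
  - split.
    + intros z Hz. apply Esub. left; auto.
    + intros Hs. apply (Hn' r). left. apply Hs. auto.
  - unfold P. apply (good_ext _ _ E); auto.
    intros z; split; [intros [Hz|Hz]; auto; apply Esub; right; auto | intros; left; auto]. }
set (Phi := fun v => epsilon (inhabits 0) (fun r => Gf (v, r))).
assert (HPhi : forall v, Dom v -> Gf (v, Phi v)).
{ intros v Hv. unfold Phi. apply (epsilon_spec (inhabits 0) (fun r => Gf (v, r))). auto. }
destruct Gfgood as [Hf [Hd [Ha [Hs Hp]]]].
exists Phi. split; [|split; [|split]].
- intros u v Hu Hv. apply (Hf (vadd u v)); [apply HPhi; auto|]. apply Ha; apply HPhi; auto.
- intros t v Hv. apply (Hf (vscal t v)); [apply HPhi; auto|]. apply Hs; apply HPhi; auto.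
- intros v Hv. apply Hp. apply HPhi; auto.
- intros v Hv. apply (Hf v); [apply HPhi; auto|]. right. split; auto.
Qed.

Ltac seq_eq := let i := fresh "i" in apply functional_extensionality; intro i;
  unfold sadd, sscal, szero, ssub, Cplus, Cmult, Cminus, Copp, RtoC, Ci;
  apply injective_projections; simpl; ring.

Lemma sadd_0l x : sadd szero x = x. Proof. seq_eq. Qed.
Lemma sadd_0r x : sadd x szero = x. Proof. seq_eq. Qed.
Lemma sscal_0 c : sscal c szero = szero. Proof. seq_eq. Qed.

Fixpoint fsum (k : nat) (F : nat -> R) : R :=
  match k with O => 0 | S k' => fsum k' F + F k' end.

Lemma fsum_ext k F G : (forall i, (i < k)%nat -> F i = G i) -> fsum k F = fsum k G.
Proof. induction k; simpl; intros H; auto. rewrite IHk, H; auto. Qed.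
Lemma fsum_le k F G : (forall i, (i < k)%nat -> F i <= G i) -> fsum k F <= fsum k G.
Proof. induction k; simpl; intros H; [lra|]. assert (fsum k F <= fsum k G) by (apply IHk; auto). assert (F k <= G k) by auto. lra. Qed.
Lemma fsum_plus k F G : fsum k (fun i => F i + G i) = fsum k F + fsum k G.
Proof. induction k; simpl; [ring|]. rewrite IHk; ring. Qed.
Lemma fsum_scal k t F : fsum k (fun i => t * F i) = t * fsum k F.
Proof. induction k; simpl; [ring|]. rewrite IHk; ring. Qed.
Lemma fsum_zero k : fsum k (fun _ => 0) = 0.
Proof. induction k; simpl; auto. rewrite IHk; ring. Qed.
Lemma fsum_nonneg k F : (forall i, (i < k)%nat -> 0 <= F i) -> 0 <= fsum k F.
Proof. intros H. assert (fsum k (fun _ => 0) <= fsum k F) by (apply fsum_le; auto).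
  rewrite fsum_zero in H0. lra. Qed.
Lemma fsum_single k i F : (i < k)%nat -> (forall j, j <> i -> F j = 0) -> fsum k F = F i.
Proof.
induction k; intros Hi HF; [lia|]. simpl. destruct (Nat.eq_dec i k) as [->|Ne].
- assert (fsum k F = 0). { clear IHk Hi. assert (forall j, (j < k)%nat -> F j = 0) by (intros; apply HF; lia).
    clear HF. induction k; simpl; auto. rewrite IHk; [rewrite H; auto; lra|]. intros; apply H; lia. }
  lra.
- rewrite IHk; auto; [|lia]. rewrite (HF k); [ring|]. auto.
Qed.

Definition rlin (D : cseq -> Prop) (H : cseq -> R) :=
  (forall x y, D x -> D y -> H (sadd x y) = H x + H y) /\
  (forall t x, D x -> H (sscal (RtoC t) x) = t * H x).

Definition snorm (D : cseq -> Prop) (q : cseq -> R) :=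
  (forall x, D x -> 0 <= q x) /\
  (forall x y, D x -> D y -> q (sadd x y) <= q x + q y) /\
  (forall c x, D x -> q (sscal c x) = Cmod c * q x).

Lemma snorm_zero D q : subspace D -> snorm D q -> q szero = 0.
Proof.
intros [H0 _] [_ [_ Hs]]. rewrite <- (sscal_0 (RtoC 0)). rewrite Hs; auto.
rewrite Cmod_0. ring.
Qed.

Definition diagk (m : nat) (z : cseq) : V := fun i => if Nat.ltb i m then z else szero.
Definition ev (i : nat) (y : cseq) : V := fun j => if Nat.eqb j i then y else szero.

Lemma decomp (k : nat) (D : nat -> cseq -> Prop) (q : nat -> cseq -> R) (C : R) (h : cseq -> R)
  (I0 : cseq -> Prop) :
  subspace I0 -> (forall z, I0 z -> forall i, (i < k)%nat -> D i z) ->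
  0 <= C ->
  (forall i, subspace (D i)) ->
  (forall i, snorm (D i) (q i)) ->
  rlin I0 h ->
  (forall z, I0 z -> Rabs (h z) <= C * fsum k (fun i => q i z)) ->
  exists H : nat -> cseq -> R, (forall i, rlin (D i) (H i)) /\
    (forall i y, D i y -> Rabs (H i y) <= C * q i y) /\
    forall z, I0 z -> h z = fsum k (fun i => H i z).
Proof.
intros [HI0 [HIa HIs]] HI HC HD Hq Hh Hb.
destruct k as [|k'].
{ exists (fun _ _ => 0). split; [|split].
  - intros i; split; intros; ring.
  - intros i y Hy. rewrite Rabs_R0. destruct (Hq i) as [Hq0 _]. assert (0 <= q i y) by auto. nra.
  - intros z Hz. simpl. assert (X := Hb z Hz). simpl in X. rewrite Rmult_0_r in X.
    assert (Y := Rabs_pos (h z)). assert (Rabs (h z) = 0) by lra.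
    apply Rabs_eq_0 in H. lra. }
set (k := S k') in *.
set (Dom := fun v : V => forall i, ((i < k)%nat -> D i (v i)) /\ ((k <= i)%nat -> v i = szero)).
set (p := fun v : V => C * fsum k (fun i => q i (v i))).
set (M := fun v : V => exists z, I0 z /\ v = diagk k z).
set (phi := fun v : V => h (v O)).
assert (HDz : forall i, D i szero) by (intros i; destruct (HD i); tauto).
assert (HDa : forall i x y, D i x -> D i y -> D i (sadd x y)) by (intros i; destruct (HD i) as [_ [A _]]; auto).
assert (HDs : forall i c x, D i x -> D i (sscal c x)) by (intros i; destruct (HD i) as [_ [_ A]]; auto).
assert (Hq0 : forall i, q i szero = 0) by (intros i; apply (snorm_zero (D i)); auto).
assert (diag_eq : forall z i, (i < k)%nat -> diagk k z i = z).
{ intros z i Hi. unfold diagk. destruct (Nat.ltb_spec i k); auto; lia. }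
destruct (HB Dom p M phi) as [Phi [PhiA [PhiS [PhiP PhiM]]]].
- intros u v Hu Hv i. destruct (Hu i) as [Hu1 Hu2]. destruct (Hv i) as [Hv1 Hv2]. split.
  + intros Hi. unfold vadd. apply HDa; auto.
  + intros Hi. unfold vadd. rewrite Hu2, Hv2; auto. apply sadd_0l.
- intros t v Hv i. destruct (Hv i) as [Hv1 Hv2]. split.
  + intros Hi. unfold vscal. apply HDs; auto.
  + intros Hi. unfold vscal. rewrite Hv2; auto. apply sscal_0.
- intros u v Hu Hv. unfold p. rewrite <- Rmult_plus_distr_l, <- fsum_plus.
  apply Rmult_le_compat_l; auto. apply fsum_le. intros i Hi. unfold vadd.
  destruct (Hq i) as [_ [A _]]. apply A; [apply Hu | apply Hv]; auto.
- intros t v Ht Hv. unfold p. rewrite (fsum_ext _ _ (fun i => t * q i (v i))).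
  + rewrite fsum_scal. ring.
  + intros i Hi. unfold vscal. destruct (Hq i) as [_ [_ A]]. rewrite A; [|apply Hv; auto].
    rewrite Cmod_R, Rabs_pos_eq; lra.
- exists szero. split; auto. apply functional_extensionality; intro i. unfold diagk, vzero.
  destruct (Nat.ltb i k); auto.
- intros v [z [Hz ->]] i. split.
  + intros Hi. rewrite diag_eq by auto. apply HI; auto.
  + intros Hi. unfold diagk. destruct (Nat.ltb_spec i k); auto; lia.
- intros u v [z [Hz ->]] [w [Hw ->]]. exists (sadd z w). split.
  + apply HIa; auto.
  + apply functional_extensionality; intro i. unfold vadd, diagk. destruct (Nat.ltb i k); auto.
    apply sadd_0l.
- intros t v [z [Hz ->]]. exists (sscal (RtoC t) z). split.
  + apply HIs; auto.
  + apply functional_extensionality; intro i. unfold vscal, diagk. destruct (Nat.ltb i k); auto.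
    apply sscal_0.
- intros u v [z [Hz ->]] [w [Hw ->]]. unfold phi, vadd. rewrite !diag_eq by (unfold k; lia).
  destruct Hh as [A _]. apply A; auto.
- intros t v [z [Hz ->]]. unfold phi, vscal. rewrite !diag_eq by (unfold k; lia).
  destruct Hh as [_ A]. apply A; auto.
- intros v [z [Hz ->]]. unfold phi, p. rewrite !diag_eq by (unfold k; lia).
  rewrite (fsum_ext _ _ (fun i => q i z)).
  + assert (X := Hb z Hz). assert (Y := Rle_abs (h z)). lra.
  + intros i Hi. rewrite diag_eq; auto.
- assert (Hev : forall i y, (i < k)%nat -> D i y -> Dom (ev i y)).
  { intros i y Hi Hy j. unfold ev. split.
    - intros Hj. destruct (Nat.eqb_spec j i); subst; auto.
    - intros Hj. destruct (Nat.eqb_spec j i); auto; lia. }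
  assert (HpEv : forall i y, (i < k)%nat -> p (ev i y) = C * q i y).
  { intros i y Hi. unfold p. f_equal. rewrite (fsum_single k i); auto.
    - unfold ev. rewrite Nat.eqb_refl. auto.
    - intros j Hj. unfold ev. destruct (Nat.eqb_spec j i); [lia|]. auto. }
  exists (fun i y => if Nat.ltb i k then Phi (ev i y) else 0). split; [|split].
  + intros i. destruct (Nat.ltb_spec i k) as [Hi|Hi].
    * split.
      -- intros x y Hx Hy. rewrite <- PhiA; try apply Hev; auto. f_equal.
         apply functional_extensionality; intro j. unfold ev, vadd.
         destruct (Nat.eqb j i); auto. rewrite sadd_0l; auto.
      -- intros t x Hx. rewrite <- PhiS; try apply Hev; auto. f_equal.
         apply functional_extensionality; intro j. unfold ev, vscal.
         destruct (Nat.eqb j i); auto. rewrite sscal_0; auto.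
    * split; intros; ring.
  + intros i y Hy. destruct (Nat.ltb_spec i k) as [Hi|Hi].
    * apply Rabs_le. split.
      -- assert (E1 : vscal (-1) (ev i y) = ev i (sscal (RtoC (-1)) y)).
         { apply functional_extensionality; intro j. unfold ev, vscal.
           destruct (Nat.eqb j i); auto. apply sscal_0. }
         assert (X := PhiP _ (Hev i _ Hi (HDs i (RtoC (-1)) y Hy))).
         rewrite HpEv in X; auto. rewrite <- E1, PhiS in X by (apply Hev; auto).
         destruct (Hq i) as [_ [_ A]]. rewrite A in X; auto.
         rewrite Cmod_R, Rabs_m1 in X. lra.
      -- rewrite <- HpEv; auto.
    * rewrite Rabs_R0. destruct (Hq i) as [A _]. assert (0 <= q i y) by auto. nra.
  + intros z Hz.
    assert (HM : M (diagk k z)) by (exists z; auto).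
    rewrite <- (diag_eq z O) by (unfold k; lia).
    fold (phi (diagk k z)). rewrite <- PhiM; auto.
    assert (DomD : forall m, (m <= k)%nat -> Dom (diagk m z)).
    { intros m Hm i. unfold diagk. split.
      - intros Hi. destruct (Nat.ltb i m); [apply HI; auto | auto].
      - intros Hi. destruct (Nat.ltb_spec i m); auto; lia. }
    assert (Ind : forall m, (m <= k)%nat -> Phi (diagk m z) =
        fsum m (fun i => if Nat.ltb i k then Phi (ev i z) else 0)).
    { induction m; intros Hm.
      - simpl. assert (E0 : diagk 0 z = vscal 0 (diagk 0 z)).
        { apply functional_extensionality; intro j. unfold diagk, vscal. simpl.
          rewrite sscal_0; auto. }
        rewrite E0, PhiS; [ring|]. apply DomD; lia.
      - simpl. rewrite <- IHm by lia.
        assert (E0 : diagk (S m) z = vadd (diagk m z) (ev m z)).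
        { apply functional_extensionality; intro j. unfold diagk, vadd, ev.
          destruct (Nat.ltb_spec j (S m)); destruct (Nat.ltb_spec j m);
            destruct (Nat.eqb_spec j m); try lia.
          - rewrite sadd_0r; auto.
          - rewrite sadd_0l; auto.
          - rewrite sadd_0l; auto. }
        rewrite E0, PhiA; [| apply DomD; lia | apply Hev; auto; lia].
        destruct (Nat.ltb_spec m k); [auto | lia]. }
    apply Ind; auto.
Qed.

Lemma Cmod_le_sum (c : C) : Cmod c <= Rabs (fst c) + Rabs (snd c).
Proof.
destruct c as [a b]. unfold Cmod. simpl.
rewrite <- (sqrt_Rsqr (Rabs a + Rabs b)) by (assert (H1 := Rabs_pos a); assert (H2 := Rabs_pos b); lra).
apply sqrt_le_1_alt. unfold Rsqr.
assert (H1 := Rabs_pos a); assert (H2 := Rabs_pos b).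
assert (a * a = Rabs a * Rabs a) by (rewrite <- Rabs_mult; rewrite Rabs_pos_eq; [ring| nra]).
assert (b * b = Rabs b * Rabs b) by (rewrite <- Rabs_mult; rewrite Rabs_pos_eq; [ring| nra]).
simpl. nra.
Qed.

Lemma snd_le_Cmod (c : C) : Rabs (snd c) <= Cmod c.
Proof. assert (H := Rmax_Cmod c). assert (H2 := Rmax_r (Rabs (fst c)) (Rabs (snd c))). lra. Qed.
Lemma fst_le_Cmod (c : C) : Rabs (fst c) <= Cmod c.
Proof. assert (H := Rmax_Cmod c). assert (H2 := Rmax_l (Rabs (fst c)) (Rabs (snd c))). lra. Qed.

Lemma lim_abs_bound (a b : nat -> R) : (forall n, Rabs (a n) <= b n) -> is_lim_seq b 0 -> is_lim_seq a 0.
Proof.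
intros H Hb. apply is_lim_seq_abs_0.
apply (is_lim_seq_le_le (fun _ => 0) _ b); auto.
- intros n; split; [apply Rabs_pos | auto].
- apply is_lim_seq_const.
Qed.

Lemma lim_plus0 (a b : nat -> R) : is_lim_seq a 0 -> is_lim_seq b 0 -> is_lim_seq (fun n => a n + b n) 0.
Proof. intros Ha Hb. assert (X := is_lim_seq_plus' _ _ _ _ Ha Hb). rewrite Rplus_0_r in X. exact X. Qed.

Lemma lim_scal0 (a : nat -> R) c : is_lim_seq a 0 -> is_lim_seq (fun n => c * a n) 0.
Proof. intros Ha. assert (X := is_lim_seq_scal_l _ c _ Ha). simpl in X. rewrite Rmult_0_r in X. exact X. Qed.

Lemma fsum_lim k (F : nat -> nat -> R) : (forall i, (i < k)%nat -> is_lim_seq (F i) 0) ->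
  is_lim_seq (fun n => fsum k (fun i => F i n)) 0.
Proof.
induction k; intros H; simpl.
- apply is_lim_seq_const.
- apply lim_plus0; auto.
Qed.

Lemma fsum_shift n F : fsum (S n) F = F O + fsum n (fun i => F (S i)).
Proof. induction n; simpl in *; [ring|]. rewrite IHn. ring. Qed.

Lemma fold_fsum {A : Type} (g : A -> R) (l : list A) :
  fold_right (fun i acc => g i + acc) 0 l =
  fsum (length l) (fun i => match nth_error l i with Some e => g e | None => 0 end).
Proof.
induction l; [simpl; auto|]. change (length (a :: l)) with (S (length l)). rewrite fsum_shift. simpl. rewrite IHl. auto.
Qed.

Lemma semisum_lim {I : Type} (p : I -> cseq -> R) l (w : nat -> cseq) :
  (forall i, is_lim_seq (fun m => p i (w m)) 0) -> is_lim_seq (fun m => semisum p l (w m)) 0.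
Proof.
intros H. induction l; simpl.
- apply is_lim_seq_const.
- apply lim_plus0; auto.
Qed.

Lemma semisum_nonneg {I : Type} (X : cseq -> Prop) (p : I -> cseq -> R) l x :
  seminorm_family X p -> X x -> 0 <= semisum p l x.
Proof.
intros Hs Hx. induction l; simpl; [lra|]. destruct (Hs a) as [A _]. assert (0 <= p a x) by auto. lra.
Qed.

Lemma finsupp_in (X : cseq -> Prop) : subspace X -> contains_phi X ->
  forall N z, (forall j, (N <= j)%nat -> z j = RtoC 0) -> X z.
Proof.
intros [H0 [Ha Hs]] Hphi N. induction N; intros z Hz.
- replace z with szero; auto. apply functional_extensionality; intro j. rewrite Hz; auto. lia.
- replace z with (sadd (trunc N z) (sscal (z N) (delta N))).
  + apply Ha; auto. apply IHN. intros j Hj. unfold trunc. destruct (Nat.ltb_spec j N); auto; lia.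
  + apply functional_extensionality; intro j. unfold sadd, sscal, trunc, delta.
    destruct (Nat.ltb_spec j N); destruct (Nat.eqb_spec j N); try lia.
    * apply injective_projections; simpl; ring.
    * subst. apply injective_projections; simpl; ring.
    * rewrite (Hz j) by lia. apply injective_projections; simpl; ring.
Qed.

Lemma csum_zero (f : nat -> C) l : (forall k, In k l -> f k = RtoC 0) -> csum (map f l) = RtoC 0.
Proof.
induction l; intros H; simpl; auto. rewrite H by (left; auto). rewrite IHl by (intros; apply H; right; auto).
apply injective_projections; simpl; ring.
Qed.

Lemma Tn_supp (pp qq : nat -> nat) (Hpq : forall n, (pp n < qq n)%nat) (n : nat) (x : cseq) (j : nat) : (qq n <= j)%nat -> Defs.Tn pp qq n x j = RtoC 0.
Proof.
intros Hj. unfold Defs.Tn. rewrite csum_zero.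
- apply injective_projections; simpl; ring.
- intros k Hk. apply in_seq in Hk. specialize (Hpq n). unfold trunc.
  destruct (Nat.ltb_spec j k); auto. lia.
Qed.

Lemma ssub_eq x y : ssub x y = sadd x (sscal (RtoC (-1)) y).
Proof. seq_eq. Qed.

Lemma Cmod_tri3 a b c : Cmod (Cminus a b) <= Cmod (Cminus c a) + Cmod (Cminus c b).
Proof.
replace (Cminus a b) with (Cplus (Copp (Cminus c a)) (Cminus c b))
  by (apply injective_projections; simpl; ring).
eapply Rle_trans; [apply Cmod_triangle|]. rewrite Cmod_opp. lra.
Qed.

Lemma coord_conv {I : Type} (Y : cseq -> Prop) (p : I -> cseq -> R) (u : nat -> cseq) x j :
  is_FK Y p -> (forall m, Y (u m)) -> Y x -> (forall i, is_lim_seq (fun m => p i (ssub (u m) x)) 0) ->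
  is_lim_seq (fun m => Cmod (Cminus (u m j) (x j))) 0.
Proof.
intros [[H0 [Ha Hs]] [_ [_ [Hc _]]]] Hu Hx Hl.
destruct (Hc j) as [l [c Hcb]].
apply (is_lim_seq_le_le (fun _ => 0) _ (fun m => c * semisum p l (ssub (u m) x))).
- intros m. split; [apply Cmod_ge_0|].
  apply (Hcb (ssub (u m) x)). rewrite ssub_eq. apply Ha; auto.
- apply is_lim_seq_const.
- apply lim_scal0. apply semisum_lim. auto.
Qed.

Lemma inter_FK (IY : nat -> Type) (Y : nat -> cseq -> Prop) (pY : forall n, IY n -> cseq -> R) :
  (forall n, is_FK (Y n) (pY n)) -> is_FK (inter_space Y) (inter_semi pY).
Proof.
intros HF.
assert (HS : forall n, subspace (Y n)) by (intros n; apply HF).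
split; [|split; [|split; [|split]]].
- split; [|split].
  + intros n. apply HS.
  + intros x y Hx Hy n. destruct (HS n) as [_ [A _]]. auto.
  + intros c x Hx n. destruct (HS n) as [_ [_ A]]. auto.
- intros [n j]. destruct (HF n) as [_ [Hsn _]]. destruct (Hsn j) as [A [B C]].
  unfold inter_semi; simpl. split; [|split]; intros; auto.
- assert (Hc : forall n, {e : nat -> option (IY n) | forall i, exists k, e k = Some i}).
  { intros n. apply constructive_indefinite_description. apply HF. }
  exists (fun k => let (a, b) := Cantor.of_nat k in
     match proj1_sig (Hc a) b with Some j => Some (existT IY a j) | None => None end).
  intros [n j]. destruct (proj2_sig (Hc n) j) as [b Hb].
  exists (Cantor.to_nat (n, b)). rewrite Cantor.cancel_of_to. rewrite Hb. auto.
- intros j. destruct (HF 0%nat) as [_ [_ [_ [Hc _]]]]. destruct (Hc j) as [l [c Hcb]].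
  exists (map (existT IY 0%nat) l), c. intros x Hx.
  replace (semisum (inter_semi pY) (map (existT IY 0%nat) l) x) with (semisum (pY 0%nat) l x).
  + apply Hcb. apply Hx.
  + clear. induction l; simpl; auto. rewrite IHl. auto.
- intros u Hu Hcau.
  assert (Hn : forall n, exists x, Y n x /\ forall i, is_lim_seq (fun m => pY n i (ssub (u m) x)) 0).
  { intros n. destruct (HF n) as [_ [_ [_ [_ Hcomp]]]]. apply Hcomp.
    - intros m. apply Hu.
    - intros i eps He. apply (Hcau (existT IY n i) eps He). }
  apply functional_choice in Hn. destruct Hn as [xs Hxs].
  assert (Eq : forall n, xs n = xs 0%nat).
  { intros n. apply functional_extensionality; intro j.
    assert (L1 := coord_conv (Y n) (pY n) u (xs n) j (HF n) (fun m => Hu m n) (proj1 (Hxs n)) (proj2 (Hxs n))).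
    assert (L0 := coord_conv (Y 0%nat) (pY 0%nat) u (xs 0%nat) j (HF 0%nat) (fun m => Hu m 0%nat) (proj1 (Hxs 0%nat)) (proj2 (Hxs 0%nat))).
    assert (L := lim_plus0 _ _ L1 L0).
    assert (Le := is_lim_seq_le (fun _ => Cmod (Cminus (xs n j) (xs 0%nat j))) _ _ _
      (fun m => Cmod_tri3 (xs n j) (xs 0%nat j) (u m j)) (is_lim_seq_const _) L).
    simpl in Le. assert (G := Cmod_ge_0 (Cminus (xs n j) (xs 0%nat j))).
    assert (Z : Cmod (Cminus (xs n j) (xs 0%nat j)) = 0) by lra.
    apply Cmod_eq_0 in Z.
    assert (Z1 := f_equal fst Z). assert (Z2 := f_equal snd Z). simpl in Z1, Z2.
    apply injective_projections; lra. }
  exists (xs 0%nat). split.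
  + intros n. rewrite <- (Eq n). apply Hxs.
  + intros [n i]. unfold inter_semi; simpl. rewrite <- (Eq n). apply Hxs.
Qed.

Lemma fsum_minus k F G : fsum k (fun i => F i - G i) = fsum k F - fsum k G.
Proof. induction k; simpl; [ring|]. rewrite IHk; ring. Qed.

Theorem mainTheorem4 (pp qq : nat -> nat)
  (Hpq : forall n, (pp n < qq n)%nat)
  (Hq : forall M : nat, exists N, forall n, (N <= n)%nat -> (M <= qq n)%nat)
  (IX : Type) (X : cseq -> Prop) (pX : IX -> cseq -> R)
  (HX : is_FK X pX) (HphiX : contains_phi X)
  (IY : nat -> Type) (Y : nat -> cseq -> Prop) (pY : forall n, IY n -> cseq -> R)
  (HY : forall n, dc_conull pp qq X pX (Y n) (pY n)) :
  dc_conull pp qq X pX (inter_space Y) (inter_semi pY).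
Proof.
assert (HYfk : forall n, is_FK (Y n) (pY n)) by (intros n; apply (HY n)).
assert (HIfk := inter_FK IY Y pY HYfk).
assert (Hincl : forall n x, X x -> Y n x) by (intros n; apply (HY n)).
destruct (HY 0%nat) as [HXfk [_ [_ [Hne _]]]].
assert (HXsub : subspace X) by apply HXfk.
assert (HTX : forall n x, X (Defs.Tn pp qq n x)).
{ intros n x. apply (finsupp_in X HXsub HphiX (qq n)). intros j Hj. apply Tn_supp; auto. }
split; [exact HXfk|]. split; [exact HIfk|]. split; [intros x Hx n; apply Hincl; auto|].
split; [exact Hne|].
intros x Hdb. assert (HXx : X x) by apply Hdb.
split; [intros n; apply Hincl; auto|].
intros f [[fa fs] [l [c Hc]]].
destruct HIfk as [HIsub [HIsn _]].
set (k := length l).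
set (D := fun i => match nth_error l i with Some e => Y (projT1 e) | None => fun _ : cseq => True end).
set (q := fun i => match nth_error l i with Some e => pY (projT1 e) (projT2 e) | None => fun _ : cseq => 0 end).
set (h := fun z => fst (f z)).
destruct (decomp k D q (Rabs c) h (inter_space Y)) as [H [Hlin [Hbd Hsum]]].
- exact HIsub.
- intros z Hz i Hi. unfold D. destruct (nth_error l i); auto.
- apply Rabs_pos.
- intros i. unfold D. destruct (nth_error l i) as [e|].
  + apply HYfk.
  + split; [|split]; intros; exact I.
- intros i. unfold D, q. destruct (nth_error l i) as [e|].
  + destruct (HYfk (projT1 e)) as [_ [Hs _]]. exact (Hs (projT2 e)).
  + split; [|split]; intros; lra.
- split.
  + intros x0 y0 Hx Hy. unfold h. rewrite fa; auto.
  + intros t x0 Hx. unfold h. rewrite fs; auto. simpl. ring.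
- intros z Hz. unfold h. eapply Rle_trans; [apply fst_le_Cmod|]. eapply Rle_trans; [apply Hc; auto|].
  assert (E : semisum (inter_semi pY) l z = fsum k (fun i => q i z)).
  { unfold semisum. rewrite fold_fsum. apply fsum_ext. intros i Hi. unfold q. destruct (nth_error l i); reflexivity. }
  rewrite E. assert (0 <= fsum k (fun i => q i z)) by (rewrite <- E; apply (semisum_nonneg (inter_space Y)); auto).
  apply Rmult_le_compat_r; auto. apply Rle_abs.
- set (T := fun n => Defs.Tn pp qq n x).
  assert (Hlim : forall i, (i < k)%nat ->
     is_lim_seq (fun n => H i (T n) - H i x) 0 /\
     is_lim_seq (fun n => H i (sscal Ci (T n)) - H i (sscal Ci x)) 0).
  { intros i Hi. destruct (nth_error l i) as [e|] eqn:En.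
    2:{ apply nth_error_None in En. unfold k in Hi. lia. }
    assert (HD : D i = Y (projT1 e)) by (unfold D; rewrite En; auto).
    assert (Hqe : q i = pY (projT1 e) (projT2 e)) by (unfold q; rewrite En; auto).
    set (m := projT1 e) in *.
    destruct (Hlin i) as [Ha Hs]. rewrite HD in Ha, Hs.
    assert (Hb : forall y, Y m y -> Rabs (H i y) <= Rabs c * pY m (projT2 e) y).
    { intros y Hy. rewrite <- Hqe. apply Hbd. rewrite HD. auto. }
    destruct (HYfk m) as [[Y0 [Ya Ys]] [Ysn _]].
    set (G := fun y => (H i y, - H i (sscal Ci y)) : C).
    assert (Gd : dual (Y m) (pY m) G).
    { split; [split|].
      - intros y1 y2 Hy1 Hy2. unfold G. rewrite Ha by auto.
        replace (sscal Ci (sadd y1 y2)) with (sadd (sscal Ci y1) (sscal Ci y2)) by seq_eq.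
        rewrite Ha by (apply Ys; auto). apply injective_projections; simpl; ring.
      - intros c0 y Hy. unfold G.
        replace (sscal c0 y) with (sadd (sscal (RtoC (fst c0)) y) (sscal (RtoC (snd c0)) (sscal Ci y))) by seq_eq.
        replace (sscal Ci (sadd (sscal (RtoC (fst c0)) y) (sscal (RtoC (snd c0)) (sscal Ci y))))
          with (sadd (sscal (RtoC (fst c0)) (sscal Ci y)) (sscal (RtoC (- snd c0)) y)) by seq_eq.
        rewrite !Ha by (repeat apply Ys; auto).
        rewrite !Hs by (repeat apply Ys; auto).
        apply injective_projections; simpl; ring.
      - exists (projT2 e :: nil), (2 * Rabs c). intros y Hy. simpl.
        eapply Rle_trans; [apply Cmod_le_sum|]. simpl. rewrite Rabs_Ropp.
        assert (B1 := Hb y Hy). assert (B2 := Hb (sscal Ci y) (Ys _ _ Hy)).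
        destruct (Ysn (projT2 e)) as [_ [_ Hh]]. rewrite Hh, Cmod_Ci in B2 by auto. lra. }
    destruct (HY m) as [_ [_ [_ [_ Hconull]]]]. destruct (Hconull x Hdb) as [_ HW].
    assert (L := HW G Gd).
    split.
    - apply (lim_abs_bound _ (fun n => Cmod (Cminus (G (T n)) (G x)))); auto.
      intros n. eapply Rle_trans; [|apply fst_le_Cmod]. unfold G; simpl. right; f_equal; ring.
    - apply (lim_abs_bound _ (fun n => Cmod (Cminus (G (T n)) (G x)))); auto.
      intros n. eapply Rle_trans; [|apply snd_le_Cmod]. unfold G; simpl.
      rewrite <- Rabs_Ropp. right; f_equal; ring. }
  assert (HIT : forall n, inter_space Y (T n)) by (intros n n'; apply Hincl; apply HTX).
  assert (HIx : inter_space Y x) by (intros n'; apply Hincl; auto).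
  destruct HIsub as [_ [_ HIs]].
  assert (Hsnd : forall z, inter_space Y z -> snd (f z) = - h (sscal Ci z)).
  { intros z Hz. unfold h. rewrite fs by auto. unfold Ci; simpl. ring. }
  apply (is_lim_seq_le_le (fun _ => 0) _
     (fun n => Rabs (fsum k (fun i => H i (T n) - H i x)) +
               Rabs (fsum k (fun i => H i (sscal Ci (T n)) - H i (sscal Ci x))))).
  + intros n. split; [apply Cmod_ge_0|]. eapply Rle_trans; [apply Cmod_le_sum|].
    right. f_equal.
    * f_equal. rewrite fsum_minus. rewrite <- !Hsum by auto. unfold h, T. simpl. ring.
    * rewrite <- Rabs_Ropp. f_equal. rewrite fsum_minus. rewrite <- !Hsum by auto.
      unfold T in *. simpl. rewrite !Hsnd by auto. unfold h, T. ring.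
  + apply is_lim_seq_const.
  + apply lim_plus0; apply -> is_lim_seq_abs_0; apply (fsum_lim k (fun i n => _)); intros i Hi; apply Hlim; auto.
Qed.
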